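(* Let $\Gamma$ be a connected countable graph and let $(B_n)_{n\in\mathbb N}$ satisfy $(\dagger)$. Let $u,v\in V(\Gamma)$ be distinct and let $P$ be a path with end-vertices $u$ and $v$ such that no vertex of $V(P)\setminus\{u,v\}$ is critical. Then no maximum matching misses both $u$ and $v$.
   Context: Condition $(\dagger)$ on $(B_n)_{n\in\mathbb N}$: each $B_n\subseteq V(\Gamma)$ is finite, $B_n\subseteq B_{n+1}$, $\bigcup_n B_n=V(\Gamma)$, and the subgraph induced on each $B_n$ is connected. A matching $M$ misses a vertex $x$ if no edge of $M$ contains $x$. The miss sequence of $M$ is $(m_n)_{n\in\mathbb N}$ with $m_n$ the number of vertices of $B_n$ missed by $M$. For matchings $M_1,M_2$ with miss sequences $(a_n),(b_n)$, write $M_1<M_2$ if there is $N$ with $a_n=b_n$ for all $n<N$ and $a_N>b_N$. A maximum matching is a matching $M$ for which no matching $M'$ satisfies $M<M'$. A vertex is critical if no maximum matching misses it. *)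

(* Defs.v *)
From mathcomp Require Import all_boot.
From mathcomp Require Import boolp.
Set Implicit Arguments. Unset Strict Implicit. Unset Printing Implicit Defensive.

Definition simple_graph (V : eqType) (adj : rel V) : Prop :=
  symmetric adj /\ irreflexive adj.

Definition connected_graph (V : eqType) (adj : rel V) : Prop :=
  forall x y : V, exists p : seq V, path adj x p /\ last x p = y.

(* Condition (dagger): finite sets B n (duplicate-free lists), nested,
   exhausting V, each inducing a connected subgraph. *)
Definition dagger (V : eqType) (adj : rel V) (B : nat -> seq V) : Prop :=
  [/\ forall n, uniq (B n),
      forall n, {subset B n <= B n.+1},
      forall x : V, exists n, x \in B n
    & forall n x y, x \in B n -> y \in B n ->
        exists p : seq V, [/\ path adj x p, last x p = y & all (mem (B n)) p]].

(* A matching: a set of edges (a symmetric relation contained in adj)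
   that are pairwise disjoint (each vertex in at most one edge). *)
Definition is_matching (V : eqType) (adj : rel V) (M : V -> V -> Prop) : Prop :=
  [/\ forall x y, M x y -> M y x,
      forall x y, M x y -> adj x y
    & forall x y z, M x y -> M x z -> y = z].

Definition misses (V : eqType) (M : V -> V -> Prop) (x : V) : Prop :=
  forall y, ~ M x y.

Definition miss_seq (V : eqType) (B : nat -> seq V) (M : V -> V -> Prop)
  (n : nat) : nat :=
  count (fun x => `[< misses M x >]) (B n).

Definition match_lt (V : eqType) (B : nat -> seq V) (M1 M2 : V -> V -> Prop) : Prop :=
  exists N, (forall n, n < N -> miss_seq B M1 n = miss_seq B M2 n)
            /\ miss_seq B M1 N > miss_seq B M2 N.

Definition maximum_matching (V : eqType) (adj : rel V) (B : nat -> seq V)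
  (M : V -> V -> Prop) : Prop :=
  is_matching adj M /\
  forall M', is_matching adj M' -> ~ match_lt B M M'.

Definition critical (V : eqType) (adj : rel V) (B : nat -> seq V) (x : V) : Prop :=
  forall M, maximum_matching adj B M -> ~ misses M x.

(* Main.v *)
Require Import Defs.
From mathcomp Require Import all_boot.
From mathcomp Require Import boolp.
From mathcomp Require Import zify.
Set Implicit Arguments. Unset Strict Implicit.

Lemma first_diff (f g : nat -> nat) : (exists n, f n <> g n) ->
  exists N, (forall n, n < N -> f n = g n) /\ f N <> g N.
Proof.
move=> H.
have H' : exists n, f n != g n by case: H => n Hn; exists n; apply/eqP.
exists (ex_minn H'); case: ex_minnP => m /eqP Hm Hmin; split => // n Hn.
apply/eqP; apply: contraTT Hn => Hne; rewrite -leqNgt; exact: Hmin.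
Qed.

Lemma count_sum (T : eqType) (a b c d : pred T) (s : seq T) :
  (forall x, a x + b x = c x + d x) ->
  count a s + count b s = count c s + count d s.
Proof.
move=> H; elim: s => //= x s IH; have := H x; lia.
Qed.

Lemma count_le (T : eqType) (a b : pred T) (s : seq T) :
  (forall x, a x <= b x) -> count a s <= count b s.
Proof. move=> H; elim: s => //= x s IH; have := H x; lia. Qed.

Lemma count_le_lt (T : eqType) (a b : pred T) (s : seq T) :
  (forall x, a x <= b x) -> forall y, y \in s -> a y < b y ->
  count a s < count b s.
Proof.
move=> H y; elim: s => [|x s IH] //=; rewrite inE => /orP [/eqP <-|ys] hy.
- have := count_le s H; lia.
- have := IH ys hy; have := H x; lia.
Qed.

Fixpoint altP (V : Type) (M M' : V -> V -> Prop) (x1 : V) (k : nat) (z : V) : Prop :=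
  match k with
  | 0 => z = x1
  | k'.+1 => exists y, altP M M' x1 k' y /\ (if odd k' then M' y z else M y z)
  end.

Lemma altP_uniq (V : eqType) adj (M M' : V -> V -> Prop) x1 :
  is_matching adj M -> is_matching adj M' ->
  forall k y z, altP M M' x1 k y -> altP M M' x1 k z -> y = z.
Proof.
move=> [_ _ uM] [_ _ uM']; elim=> [|k IH] y z /=; first by move=> -> ->.
move=> [y1 [h1 e1]] [z1 [h2 e2]]; have E := IH _ _ h1 h2; subst z1.
by case: (odd k) e1 e2 => e1 e2; [exact: uM' e1 e2 | exact: uM e1 e2].
Qed.

Lemma altP_prefix (V : Type) (M M' : V -> V -> Prop) x1 :
  forall j z, altP M M' x1 j z -> forall i, i <= j -> exists w, altP M M' x1 i w.
Proof.
elim=> [|j IH] z.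
- move=> _ i; rewrite leqn0 => /eqP ->; by exists x1.
- move=> H i; rewrite leq_eqVlt => /orP [/eqP ->|hi]; first by exists z.
  case: H => y [hy _]; exact: IH hy i hi.
Qed.


Lemma altP_closM (V : eqType) adj (M M' : V -> V -> Prop) x1 :
  is_matching adj M -> is_matching adj M' -> misses M' x1 ->
  forall k x y, altP M M' x1 k x -> M x y -> exists j, altP M M' x1 j y.
Proof.
move=> [sM _ uM] [sM' _ uM'] hx1 k x y hk hxy.
case hk2: (odd k).
- case: k hk hk2 => [|k] //= [w [hw e]] hk2.
  move: e; rewrite (negbTE hk2) => e. have E := uM _ _ _ (sM _ _ e) hxy; subst y. by exists k.
- exists k.+1; exists x; by rewrite hk2.
Qed.

Lemma altP_closM' (V : eqType) adj (M M' : V -> V -> Prop) x1 :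
  is_matching adj M -> is_matching adj M' -> misses M' x1 ->
  forall k x y, altP M M' x1 k x -> M' x y -> exists j, altP M M' x1 j y.
Proof.
move=> [sM _ uM] [sM' _ uM'] hx1 k x y hk hxy.
case hk2: (odd k).
- exists k.+1; exists x; by rewrite hk2.
- case: k hk hk2 => [|k] /=.
  + move=> E; subst x; by have := hx1 y.
  + move=> [w [hw e]] hk2. have {}hk2 : odd k by move: hk2; rewrite /=; case: (odd k).
    rewrite /= hk2 in e. have E := uM' _ _ _ (sM' _ _ e) hxy; subst y. by exists k.
Qed.

Lemma altP_missM (V : eqType) adj (M M' : V -> V -> Prop) x1 :
  is_matching adj M -> is_matching adj M' ->
  forall k x, altP M M' x1 k x -> misses M x -> forall j z, k < j -> ~ altP M M' x1 j z.
Proof.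
move=> HM HM' k x hk hx j z hkj hj.
have [w hw] := altP_prefix hj hkj.
case: hw => y [hy e].
have E := altP_uniq HM HM' hy hk; subst y.
case hk2: (odd k) e => e.
- case: k hk hk2 {hkj hy} => [|k] //= [w' [hw' e']] hk2.
  move: e'; rewrite (negbTE hk2) => e'. case: HM => sM _ _. exact: hx _ (sM _ _ e').
- exact: hx _ e.
Qed.
Definition mix (V : Type) (C : V -> Prop) (N1 N2 : V -> V -> Prop) (x y : V) : Prop :=
  (C x /\ N1 x y) \/ (~ C x /\ N2 x y).

Lemma mix_matching (V : eqType) adj (C : V -> Prop) N1 N2 :
  is_matching adj N1 -> is_matching adj N2 ->
  (forall x y, C x -> N1 x y -> C y) -> (forall x y, C x -> N2 x y -> C y) ->
  is_matching adj (mix C N1 N2).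
Proof.
move=> [s1 a1 u1] [s2 a2 u2] c1 c2; split.
- move=> x y [[cx e]|[cx e]].
  + left; split; [exact: c1 cx e | exact: s1].
  + right; split; last exact: s2.
    move=> cy; apply: cx; exact: c2 cy (s2 _ _ e).
- move=> x y [[_ e]|[_ e]]; eauto.
- move=> x y z [[cx e]|[cx e]] [[cx' e']|[cx' e']]; eauto; by [].
Qed.

Lemma mix_missesC (V : eqType) (C : V -> Prop) N1 N2 x :
  C x -> (misses (mix C N1 N2) x <-> misses N1 x).
Proof.
move=> cx; split => h y e; [apply: (h y); left; by split | case: e => [[_ e]|[? _]]; [exact: h y e| by []]].
Qed.

Lemma mix_missesNC (V : eqType) (C : V -> Prop) N1 N2 x :
  ~ C x -> (misses (mix C N1 N2) x <-> misses N2 x).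
Proof.
move=> cx; split => h y e; [apply: (h y); right; by split | case: e => [[? _]|[_ e]]; [by [] | exact: h y e]].
Qed.

Lemma asb_eq (P Q : Prop) : (P <-> Q) -> `[< P >] = `[< Q >].
Proof. move=> h; case: (asboolP P); case: (asboolP Q); tauto. Qed.

Lemma max_same (V : eqType) adj B (M M2 : V -> V -> Prop) :
  maximum_matching adj B M -> is_matching adj M2 ->
  (forall n, miss_seq B M2 n = miss_seq B M n) -> maximum_matching adj B M2.
Proof.
move=> [_ hM] h2 he; split => // M' hM' [N [h1 h3]]; apply: (hM M' hM').
exists N; split; [move=> n hn; rewrite -he; exact: h1 | by rewrite -he].
Qed.

Lemma mix_max (V : eqType) adj B (C : V -> Prop) (M M' : V -> V -> Prop) :
  maximum_matching adj B M -> maximum_matching adj B M' ->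
  (forall x y, C x -> M x y -> C y) -> (forall x y, C x -> M' x y -> C y) ->
  maximum_matching adj B (mix C M' M).
Proof.
move=> HM HM' c1 c2.
have m2 := mix_matching (proj1 HM') (proj1 HM) c2 c1.
have m3 := mix_matching (proj1 HM) (proj1 HM') c1 c2.
apply: (max_same HM m2).
have sum n : miss_seq B (mix C M' M) n + miss_seq B (mix C M M') n =
    miss_seq B M n + miss_seq B M' n.
  apply: count_sum => x; case: (pselect (C x)) => cx.
  - rewrite (asb_eq (mix_missesC _ _ cx)) (asb_eq (mix_missesC _ _ cx)); lia.
  - rewrite (asb_eq (mix_missesNC _ _ cx)) (asb_eq (mix_missesNC _ _ cx)); lia.
move=> n0; case: (pselect (miss_seq B (mix C M' M) n0 = miss_seq B M n0)) => // hne0.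
exfalso; have hex : exists n, miss_seq B (mix C M' M) n <> miss_seq B M n by exists n0.
have [N [hlt hN]] := first_diff hex.
have [hl|hg] : miss_seq B (mix C M' M) N < miss_seq B M N \/
    miss_seq B (mix C M' M) N > miss_seq B M N by lia.
- apply: (proj2 HM _ m2); exists N; split => // n hn; by rewrite hlt.
- apply: (proj2 HM' _ m3); exists N; split.
  + move=> n hn; have := sum n; have := hlt n hn; lia.
  + have := sum N; lia.
Qed.

Lemma asb_le (P Q : Prop) : (P -> Q) -> `[< P >] <= `[< Q >].
Proof. move=> h; case: (asboolP P); case: (asboolP Q) => //; tauto. Qed.

Lemma no_two_adj (V : eqType) adj B (M : V -> V -> Prop) a b :
  simple_graph adj -> dagger adj B -> maximum_matching adj B M ->
  misses M a -> misses M b -> adj a b -> False.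
Proof.
move=> [sym irr] [_ _ cov _] [[sM aM uM] hM] ma mb ab.
have hab : a <> b by move=> E; subst b; by rewrite irr in ab.
pose M2 x y := M x y \/ (x = a /\ y = b) \/ (x = b /\ y = a).
have m2 : is_matching adj M2.
  split.
  - move=> x y [e|[[-> ->]|[-> ->]]]; rewrite /M2; [left; exact: sM | by right; right | by right; left].
  - move=> x y [e|[[-> ->]|[-> ->]]]; [exact: aM | by [] | by rewrite sym].
  - move=> x y z [e|[[E1 E2]|[E1 E2]]] [f|[[F1 F2]|[F1 F2]]]; subst => //;
      try exact: uM e f;
      solve [ exfalso; by [apply: (ma _ e)| apply: (ma _ f)| apply: (mb _ e)| apply: (mb _ f)] ].
have hle n : miss_seq B M2 n <= miss_seq B M n.
  apply: count_le => x; apply: asb_le => h y e; apply: (h y); by left.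
have [n0 hn0] := cov a.
have hlt0 : miss_seq B M2 n0 < miss_seq B M n0.
  apply: (count_le_lt _ hn0).
  - move=> x; apply: asb_le => h y e; apply: (h y); by left.
  - case: (asboolP (misses M2 a)) => [h|_]; first by case: (h b); right; left.
    by case: (asboolP (misses M a)).
have hex : exists n, miss_seq B M2 n <> miss_seq B M n by exists n0; lia.
have [N [h1 h2]] := first_diff hex.
apply: (hM M2 m2); exists N; split.
- move=> n hn; by rewrite h1.
- have := hle N; lia.
Qed.

Theorem lemmaA4 (V : countType) (adj : rel V) (B : nat -> seq V)
  (Hg : simple_graph adj) (Hconn : connected_graph adj) (HB : dagger adj B)
  (u v : V) (Huv : u != v) (p : seq V)
  (Hpath : path adj u p) (Hlast : last u p = v) (Huniq : uniq (u :: p))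
  (Hnc : forall x, x \in u :: p -> x != u -> x != v -> ~ critical adj B x) :
  forall M, maximum_matching adj B M -> ~ (misses M u /\ misses M v).
Proof.
move: u Huv Hpath Hlast Huniq Hnc; elim: p => [|x1 p IH] u Huv Hpath Hlast Huniq Hnc M HM [mu mv].
  by move: Huv; rewrite -Hlast /= eqxx.
move: Hpath => /= /andP [aux1 Hpath].
case: (eqVneq x1 v) => [E|Hx1v].
  subst x1; exact: (no_two_adj Hg HB HM mu mv aux1).
move: Huniq; rewrite /= inE negb_or => /andP [/andP [Hux1 Hup] Huniq'].
have hin : x1 \in u :: x1 :: p by rewrite !inE eqxx orbT.
have hne : x1 != u by rewrite eq_sym.
have Hnc1 := Hnc x1 hin hne Hx1v.
case: (pselect (exists M', maximum_matching adj B M' /\ misses M' x1)) => [[M' [HM' mx1]] | hno];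
  last first.
  exfalso; apply: Hnc1 => M' HM' hm; apply: hno; by exists M'.
pose C x := exists k, altP M M' x1 k x.
have c1 x y : C x -> M x y -> C y.
  move=> [k hk] e; exact: altP_closM (proj1 HM) (proj1 HM') mx1 _ _ _ hk e.
have c2 x y : C x -> M' x y -> C y.
  move=> [k hk] e; exact: altP_closM' (proj1 HM) (proj1 HM') mx1 _ _ _ hk e.
have HM2 := mix_max HM HM' c1 c2.
have Cx1 : C x1 by exists 0.
have m2x1 : misses (mix C M' M) x1 by apply/(mix_missesC _ _ Cx1).
case: (pselect (C u)) => Cu; last first.
  have m2u : misses (mix C M' M) u by apply/(mix_missesNC _ _ Cu).
  exact: (no_two_adj Hg HB HM2 m2u m2x1 aux1).
have NCv : ~ C v.
  move=> [kb hb]; case: Cu => ka ha.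
  have := altP_missM (proj1 HM) (proj1 HM') ha mu.
  have := altP_missM (proj1 HM) (proj1 HM') hb mv.
  case: (ltngtP ka kb) => hk h1 h2.
  - exact: h2 _ _ hk hb.
  - exact: h1 _ _ hk ha.
  - subst kb; have := altP_uniq (proj1 HM) (proj1 HM') ha hb => E.
    by rewrite E eqxx in Huv.
have m2v : misses (mix C M' M) v by apply/(mix_missesNC _ _ NCv).
apply: (IH x1 Hx1v Hpath Hlast Huniq' _ _ HM2 (conj m2x1 m2v)).
move=> x hx hx1 hxv; apply: Hnc => //.
- by rewrite inE hx orbT.
- apply/eqP => E; subst x; move: hx; rewrite inE (negbTE Hup) orbF => /eqP E.
  by rewrite E eqxx in Hux1.
Qed.
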